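(* Let $L$ be a positive integer, let $\omega_1,\omega_2$ be completely multiplicative complex-valued functions on the positive integers, and let $K$ be an arbitrary complex-valued function on the positive divisors of $L$. For $g\mid L$ define \[ J(g)=\sum_{a\mid g}\sum_{b\mid \frac Lg}\mu(a)\mu(b)\omega_2(a)\omega_1(b)\,K\Big(\frac{bg}{a}\Big). \] Then for every factorization $L=AB$, \[ K(B)=\Big(\prod_{p\mid L}(1-\omega_1(p)\omega_2(p))^{-1}\Big)\sum_{\substack{d\mid A,\ e\mid B\\ (d,e)=1}}\omega_1(d)\omega_2(e)\,J\Big(\frac{Bd}{e}\Big). \]
   Context: $\mu$ is the Möbius function; the product is over primes $p$ dividing $L$. *)

(* Defs.v *)
From mathcomp Require Import all_boot all_order all_algebra.
From mathcomp Require Import reals.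
From mathcomp.real_closed Require Export complex.
Set Implicit Arguments. Unset Strict Implicit. Unset Printing Implicit Defensive.
Import Order.TTheory GRing.Theory Num.Theory.
Local Open Scope ring_scope.

Definition mobius (T : pzRingType) (n : nat) : T :=
  if (0 < n)%N && all (fun p => logn p n == 1)%N (primes n)
  then (-1) ^+ size (primes n) else 0.

Definition completely_multiplicative (T : pzRingType) (f : nat -> T) : Prop :=
  f 1%N = 1 /\ forall m n, (0 < m)%N -> (0 < n)%N -> f (m * n)%N = f m * f n.

Definition Jfun (T : pzRingType) (L : nat) (w1 w2 K : nat -> T) (g : nat) : T :=
  \sum_(a <- divisors g) \sum_(b <- divisors (L %/ g))
     mobius T a * mobius T b * w2 a * w1 b * K ((b * g) %/ a)%N.

(* Main.v *)
Require Import Defs.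
From mathcomp Require Import all_boot all_order all_algebra.
From mathcomp Require Import reals.
From mathcomp.real_closed Require Import complex.
From mathcomp Require Import ring zify.
Import Order.TTheory GRing.Theory Num.Theory.
Local Open Scope ring_scope.


Lemma divisorsM_perm m n : coprime m n -> (0 < m)%N -> (0 < n)%N ->
  perm_eq (divisors (m * n)) [seq (d1 * d2)%N | d1 <- divisors m, d2 <- divisors n].
Proof.
move=> cmn m0 n0; apply: uniq_perm.
- exact: divisors_uniq.
- apply: allpairs_uniq; try exact: divisors_uniq.
  move=> [a b] [c d] /allpairsP [[x y] /= [hx hy [-> ->]]]
     /allpairsP [[x' y'] /= [hx' hy' [-> ->]]] /= E.
  move: hx hy hx' hy'; rewrite -!dvdn_divisors // => hx hy hx' hy'.
  have ga : forall a b, (a %| m)%N -> (b %| n)%N -> gcdn (a * b) m = a.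
    move=> a0 b0 ha hb; rewrite gcdnC Gauss_gcdl; first exact/gcdn_idPr.
    exact: coprime_dvdr hb cmn.
  have ex : x = x' by rewrite -(ga x y) // E ga.
  subst x'; congr (_, _).
  have x0 : (0 < x)%N by apply: dvdn_gt0 m0 hx.
  by apply/eqP; rewrite -(eqn_pmul2l x0) E.
- move=> d; rewrite -dvdn_divisors ?muln_gt0 ?m0 //; apply/idP/allpairsP.
  + move=> dd; exists (gcdn d m, gcdn d n) => /=.
    rewrite -!dvdn_divisors // dvdn_gcdr dvdn_gcdr; split => //.
    apply/eqP; rewrite eqn_dvd; apply/andP; split.
    * rewrite muln_gcdl !muln_gcdr !dvdn_gcd dd dvdn_mulr // dvdn_mulr //.
      by rewrite dvdn_mull // dvdn_mull.
    * rewrite Gauss_dvd ?dvdn_gcdl //.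
      apply: (coprime_dvdl (dvdn_gcdr d m)); apply: (coprime_dvdr (dvdn_gcdr d n)).
      exact: cmn.
  + case=> [[x y] /= [hx hy ->]]; move: hx hy; rewrite -!dvdn_divisors // => hx hy.
    exact: dvdn_mul.
Qed.

Lemma sum_divisorsM (T : nmodType) m n (F : nat -> T) :
  coprime m n -> (0 < m)%N -> (0 < n)%N ->
  \sum_(d <- divisors (m * n)) F d =
  \sum_(a <- divisors m) \sum_(b <- divisors n) F (a * b)%N.
Proof.
move=> c m0 n0; rewrite (perm_big _ (divisorsM_perm _ _ c m0 n0)).
by rewrite big_allpairs_dep.
Qed.

Lemma divisors_pexp_perm p k : prime p ->
  perm_eq (divisors (p ^ k)) [seq (p ^ i)%N | i <- iota 0 k.+1].
Proof.
move=> pp; have p1 : (1 < p)%N by apply: prime_gt1.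
apply: uniq_perm; first exact: divisors_uniq.
  by rewrite map_inj_uniq ?iota_uniq //; apply: expnI.
move=> d; rewrite -dvdn_divisors ?expn_gt0 ?prime_gt0 //.
apply/(dvdn_pfactor _ _ pp)/mapP => [[i hi ->]|[i hi ->]].
  by exists i => //; rewrite mem_iota.
by exists i => //; move: hi; rewrite mem_iota.
Qed.

Lemma sum_divisors_pexpM (T : nmodType) p k X (F : nat -> T) :
  prime p -> coprime p X -> (0 < X)%N ->
  \sum_(d <- divisors (p ^ k * X)) F d =
  \sum_(i < k.+1) \sum_(b <- divisors X) F (p ^ i * b)%N.
Proof.
move=> pp c X0; rewrite sum_divisorsM ?expn_gt0 ?(prime_gt0 pp) //; last first.
  by case: k => [|k]; rewrite ?expn0 ?coprime1n // coprime_pexpl.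
rewrite (perm_big _ (divisors_pexp_perm p k pp)) big_map.
by rewrite -[iota 0 k.+1]/(index_iota 0 k.+1) big_mkord.
Qed.



Lemma coprime_primes_disj m n q : coprime m n -> q \in primes m -> q \in primes n -> False.
Proof.
move=> c; rewrite !mem_primes => /and3P[qp _ qm] /and3P[_ _ qn].
have : (q %| gcdn m n)%N by rewrite dvdn_gcd qm qn.
by rewrite (eqP c) dvdn1 => /eqP q1; rewrite q1 in qp.
Qed.

Lemma in_primes_prime q m : q \in primes m -> prime q.
Proof. by rewrite mem_primes => /andP[]. Qed.

Lemma primesM_perm m n : coprime m n -> (0 < m)%N -> (0 < n)%N ->
  perm_eq (primes (m * n)) (primes m ++ primes n).
Proof.
move=> c m0 n0; apply: uniq_perm; first exact: primes_uniq.
  rewrite cat_uniq !primes_uniq andbT /=; apply/hasPn => q qn; apply/negP => qm.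
  exact: coprime_primes_disj _ _ _ c qm qn.
by move=> q; rewrite mem_cat primesM.
Qed.

Lemma mobiusM (T : pzRingType) m n : coprime m n -> (0 < m)%N -> (0 < n)%N ->
  mobius T (m * n) = mobius T m * mobius T n.
Proof.
move=> c m0 n0; have hp := primesM_perm _ _ c m0 n0.
rewrite /mobius muln_gt0 m0 n0 /= (perm_all _ hp) all_cat (perm_size hp) size_cat.
have -> : all (fun p => logn p (m * n) == 1)%N (primes m) =
          all (fun p => logn p m == 1)%N (primes m).
  apply: eq_in_all => q qm /=; rewrite lognM // (@logn_coprime q n) ?addn0 //.
  rewrite prime_coprime; last exact: in_primes_prime _ _ qm.
  apply/negP => qn; apply: (coprime_primes_disj _ _ _ c qm).
  by rewrite mem_primes n0 qn andbT (in_primes_prime _ _ qm).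
have -> : all (fun p => logn p (m * n) == 1)%N (primes n) =
          all (fun p => logn p n == 1)%N (primes n).
  apply: eq_in_all => q qn /=; rewrite lognM // (@logn_coprime q m) ?add0n //.
  rewrite prime_coprime; last exact: in_primes_prime _ _ qn.
  apply/negP => qm; apply: (coprime_primes_disj _ _ _ c _ qn).
  by rewrite mem_primes m0 qm andbT (in_primes_prime _ _ qn).
case: (all _ (primes m)); case: (all _ (primes n)); rewrite /= ?mulr0 ?mul0r //.
by rewrite exprD.
Qed.

Lemma mobius_pexp (T : pzRingType) p i : prime p ->
  mobius T (p ^ i) = if i == 0%N then 1 else if i == 1%N then -1 else 0.
Proof.
move=> pp; case: i => [|i].
  by rewrite expn0 /mobius /= expr0.
rewrite /mobius expn_gt0 (prime_gt0 pp) /= primesX // primes_prime //= pfactorK //.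
by case: i => [|i] //=; rewrite expr1.
Qed.

Lemma musum (T : pzRingType) p k (G : nat -> T) : prime p ->
  \sum_(a < k.+1) mobius T (p ^ a) * G a = G 0%N - (if (0 < k)%N then G 1%N else 0).
Proof.
move=> pp; rewrite big_ord_recl /= mobius_pexp // mul1r.
case: k => [|k]; first by rewrite big_ord0 subr0 addr0.
rewrite big_ord_recl /= mobius_pexp //= big1 ?addr0; first by rewrite mulN1r.
by move=> i _; rewrite mobius_pexp //= mul0r.
Qed.



Definition Tf (R : comNzRingType) (u v : R) (f : nat -> R) (n x : nat) : R :=
  f x - (if (0 < n - x)%N then u * f x.+1 else 0)
  - (if (0 < x)%N then v * f x.-1 - (if (0 < n - x)%N then v * u * f x else 0) else 0).
Arguments Tf {R}.

Lemma C1 (R : comNzRingType) (u v : R) (f : nat -> R) n k m : (m + k = n)%N ->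
  \sum_(d < k.+1) u ^+ d * Tf u v f n (m + d) =
  f m - (if (0 < m)%N then v * f m.-1 else if (0 < n)%N then u * v * f 0%N else 0).
Proof.
elim: k m => [|k IH] m hm.
  rewrite big_ord1 addn0 expr0 mul1r /Tf -hm addn0 subnn /=.
  by case: m {hm} => [|m] //=; rewrite ?subr0.
rewrite big_ord_recl addn0 expr0 mul1r.
under eq_bigr => i _ do rewrite exprS -mulrA lift0 addnS -addSn.
rewrite -mulr_sumr IH; last by rewrite addSnnS.
have mn : (0 < n - m)%N by rewrite -hm subn_gt0 addnS ltnS leq_addr.
rewrite /Tf mn /=; case: m hm mn => [|m] hm mn /=.
  have -> : (0 < n)%N by rewrite -hm.
  by ring.
by ring.
Qed.

Lemma C2 (R : comNzRingType) (u v : R) (f : nat -> R) n m : (m <= n)%N ->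
  \sum_(e < m.+1) v ^+ e * Tf u v f n (m - e) =
  f m - (if (m < n)%N then u * f m.+1 else if (0 < n)%N then u * v * f m else 0).
Proof.
elim: m => [|m IH] hm.
  rewrite big_ord1 subn0 expr0 mul1r /Tf subn0 /=.
  by case: (0 < n)%N; rewrite ?subr0.
rewrite big_ord_recl subn0 expr0 mul1r.
under eq_bigr => i _ do rewrite exprS -mulrA lift0 subSS.
rewrite -mulr_sumr IH; last by apply: ltnW.
rewrite hm /Tf /= subn_gt0.
have -> : (0 < n)%N by apply: leq_trans hm.
case: (m.+1 < n)%N; by ring.
Qed.

Lemma sum_if0 (R : comNzRingType) t (F : nat -> R) :
  \sum_(j < t.+1) (if (j == 0%N :> nat) then F j else 0) = F 0%N.
Proof. by rewrite big_ord_recl /= big1 ?addr0 // => j _. Qed.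

Lemma oneD (R : comNzRingType) (u v : R) (f : nat -> R) s t : (0 < s + t)%N ->
  \sum_(i < s.+1) \sum_(j < t.+1)
     (if (i == 0%N :> nat) || (j == 0%N :> nat) then u ^+ i * v ^+ j * Tf u v f (s + t) (t + i - j) else 0)
  = (1 - u * v) * f t.
Proof.
move=> n0; rewrite big_ord_recl /=.
under eq_bigr => j _ do rewrite expr0 mul1r addn0.
rewrite C2 ?leq_addl //.
rewrite /bump /=.
under eq_bigr => i _ do rewrite (sum_if0 _ t (fun j => u ^+ (1 + i) * v ^+ j * Tf u v f (s + t) (t + (1 + i) - j))).
case: s n0 => [|s] n0.
  by rewrite big_ord0 addr0 add0n ltnn n0; ring.
under eq_bigr => i _ do rewrite expr0 mulr1 subn0 add1n exprS -mulrA.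
under eq_bigr => i _ do rewrite -addSnnS.
rewrite -mulr_sumr C1; last by rewrite !addSn addnC.
rewrite /= (_ : (t < s.+1 + t)%N) //; last by rewrite addSn ltnS leq_addl.
by ring.
Qed.



Lemma arithK P al be x a b g : (0 < P)%N -> (0 < a)%N -> (al <= x)%N -> (a %| g)%N ->
  ((P ^ be * b * (P ^ x * g)) %/ (P ^ al * a) = P ^ (x + be - al) * (b * g %/ a))%N.
Proof.
move=> P0 a0 hal /dvdnP [q ->].
have E2 : (P ^ x * P ^ be = P ^ al * P ^ (x + be - al))%N.
  by rewrite -!expnD subnKC // (leq_trans hal (leq_addr _ _)).
rewrite [(b * (q * a))%N]mulnA mulnK //.
have E3 : (P ^ be * b * (P ^ x * (q * a)) = (P ^ al * a) * (P ^ (x + be - al) * (b * q)))%N.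
  transitivity (P ^ x * P ^ be * (b * q * a))%N; first by ring.
  by rewrite E2; ring.
by rewrite E3 mulKn // muln_gt0 expn_gt0 P0.
Qed.

Lemma arithL P n M x g : (0 < P)%N -> (0 < g)%N -> (x <= n)%N -> (g %| M)%N ->
  ((P ^ n * M) %/ (P ^ x * g) = P ^ (n - x) * (M %/ g))%N.
Proof.
move=> P0 g0 hx /dvdnP [q ->]; rewrite mulnK // -{1}(subnKC hx) expnD.
rewrite (_ : (P ^ x * P ^ (n - x) * (q * g) = (P ^ x * g) * (P ^ (n - x) * q))%N); last by ring.
by rewrite mulKn // muln_gt0 expn_gt0 P0.
Qed.



Lemma cm_pow (R : pzRingType) (w : nat -> R) p i : completely_multiplicative w -> (0 < p)%N ->
  w (p ^ i)%N = w p ^+ i.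
Proof.
move=> [w1 wM] p0; elim: i => [|i IH]; first by rewrite expn0 w1 expr0.
by rewrite expnS wM ?expn_gt0 ?p0 // IH exprS.
Qed.

Lemma cm_powM (R : pzRingType) (w : nat -> R) p i a : completely_multiplicative w ->
  (0 < p)%N -> (0 < a)%N -> w (p ^ i * a)%N = w p ^+ i * w a.
Proof.
move=> hw p0 a0; have [_ wM] := hw.
by rewrite wM ?expn_gt0 ?p0 // cm_pow.
Qed.

Lemma coprime_pow p X i : coprime p X -> coprime (p ^ i) X.
Proof. by case: i => [|i] c; rewrite ?expn0 ?coprime1n // coprime_pexpl. Qed.

Lemma Jsplit (R : comNzRingType) (w1 w2 K : nat -> R) p n M x g :
  completely_multiplicative w1 -> completely_multiplicative w2 ->
  prime p -> coprime p M -> (0 < M)%N -> (g %| M)%N -> (x <= n)%N ->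
  Jfun (p ^ n * M) w1 w2 K (p ^ x * g) =
  \sum_(al < x.+1) \sum_(be < (n - x).+1)
    mobius R (p ^ al) * mobius R (p ^ be) * w2 p ^+ al * w1 p ^+ be *
    Jfun M w1 w2 (fun h => K (p ^ (x + be - al) * h)%N) g.
Proof.
move=> hw1 hw2 pp cM M0 gM hx.
have p0 := prime_gt0 pp.
have g0 : (0 < g)%N := dvdn_gt0 M0 gM.
have cg : coprime p g := coprime_dvdr gM cM.
have Mg0 : (0 < M %/ g)%N by rewrite divn_gt0 // dvdn_leq.
have cMg : coprime p (M %/ g) := coprime_dvdr (dvdn_div gM) cM.
transitivity (\sum_(al < x.+1) \sum_(a <- divisors g) \sum_(be < (n - x).+1)
   \sum_(b <- divisors (M %/ g))
   (mobius R (p ^ al) * mobius R (p ^ be) * w2 p ^+ al * w1 p ^+ be) *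
   (mobius R a * mobius R b * w2 a * w1 b * K (p ^ (x + be - al) * (b * g %/ a))%N)).
  rewrite /Jfun arithL // sum_divisors_pexpM //.
  apply: eq_bigr => al _; apply: eq_big_seq => a; rewrite -dvdn_divisors // => ag.
  have a0 : (0 < a)%N := dvdn_gt0 g0 ag.
  have ca : coprime p a := coprime_dvdr ag cg.
  rewrite sum_divisors_pexpM //.
  apply: eq_bigr => be _; apply: eq_big_seq => b; rewrite -dvdn_divisors // => bM.
  have b0 : (0 < b)%N := dvdn_gt0 Mg0 bM.
  have cb : coprime p b := coprime_dvdr bM cMg.
  rewrite !mobiusM ?coprime_pow ?expn_gt0 ?p0 // (cm_powM _ _ _ _ _ hw2) //.
  rewrite (cm_powM _ _ _ _ _ hw1) // arithK //; first by ring.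
  exact: ltn_ord al.
under eq_bigr => al _ do rewrite exchange_big.
apply: eq_bigr => al _; apply: eq_bigr => be _.
rewrite /Jfun mulr_sumr; apply: eq_bigr => a _; rewrite mulr_sumr.
by apply: eq_bigr => b _.
Qed.



Lemma swap4 (R : comNzRingType) (r1 r2 : seq nat) k1 k2 (P : nat -> nat -> bool) (X : R)
  (c : nat -> nat -> R) (Y : nat -> nat -> nat -> nat -> R) :
  \sum_(d <- r1) \sum_(e <- r2)
     (if P d e then X * \sum_(al < k1) \sum_(be < k2) c al be * Y d e al be else 0)
  = X * \sum_(al < k1) \sum_(be < k2) c al be * \sum_(d <- r1) \sum_(e <- r2 | P d e) Y d e al be.
Proof.
transitivity (\sum_(d <- r1) \sum_(e <- r2) \sum_(al < k1) \sum_(be < k2)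
   (if P d e then X * (c al be * Y d e al be) else 0)).
  apply: eq_bigr => d _; apply: eq_bigr => e _; case: (P d e).
    rewrite mulr_sumr; apply: eq_bigr => al _; rewrite mulr_sumr.
    by apply: eq_bigr.
  by rewrite big1 // => al _; rewrite big1.
under eq_bigr => d _ do rewrite exchange_big.
rewrite exchange_big.
under eq_bigr => al _ do under eq_bigr => d _ do rewrite exchange_big.
under eq_bigr => al _ do rewrite exchange_big.
rewrite -[LHS]/(\sum_(al < k1) \sum_(be < k2) \sum_(d <- r1) \sum_(e <- r2)
   (if P d e then X * (c al be * Y d e al be) else 0)).
rewrite mulr_sumr; apply: eq_bigr => al _; rewrite mulr_sumr; apply: eq_bigr => be _.
rewrite mulrA mulr_sumr; apply: eq_bigr => d _; rewrite mulr_sumr [in RHS]big_mkcond /=.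
apply: eq_bigr => e _; case: (P d e); rewrite ?mulr0 //.
by rewrite mulrA.
Qed.

Lemma cop_split p i j d e : prime p -> coprime p d -> coprime p e ->
  coprime (p ^ i * d) (p ^ j * e) = ((i == 0%N) || (j == 0%N)) && coprime d e.
Proof.
move=> pp cd ce; rewrite coprimeMl !coprimeMr (coprime_pow _ _ i ce) andbT.
rewrite (coprime_sym d) (coprime_pow _ _ j cd) /=.
case: i => [|i]; first by rewrite expn0 coprime1n.
case: j => [|j]; first by rewrite expn0 coprimen1.
by rewrite coprime_pexpl // coprime_pexpr // /coprime gcdnn; case: p pp {cd ce} => [|[|p]].
Qed.

Lemma Tf_eqP (R : comNzRingType) p (u v Q : R) (f : nat -> R) n x : prime p -> (x <= n)%N ->
  \sum_(al < x.+1) \sum_(be < (n - x).+1)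
    mobius R (p ^ al) * mobius R (p ^ be) * v ^+ al * u ^+ be * (Q * f (x + be - al)%N)
  = Q * Tf u v f n x.
Proof.
move=> pp hx.
transitivity (Q * \sum_(al < x.+1) mobius R (p ^ al) *
    \sum_(be < (n - x).+1) mobius R (p ^ be) * (v ^+ al * u ^+ be * f (x + be - al)%N)).
  rewrite mulr_sumr; apply: eq_bigr => al _; rewrite !mulr_sumr; apply: eq_bigr => be _.
  by ring.
rewrite (musum _ _ _ (fun al => \sum_(be < (n - x).+1) mobius R (p ^ be) *
      (v ^+ al * u ^+ be * f (x + be - al)%N))) //.
rewrite (musum _ _ _ (fun be => (v ^+ 0 * u ^+ be * f (x + be - 0)%N))) //.
rewrite (musum _ _ _ (fun be => (v ^+ 1 * u ^+ be * f (x + be - 1)%N))) //.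
rewrite /Tf !addn0 !subn0 addnK subn1 addn1.
case: (0 < x)%N; case: (0 < n - x)%N; rewrite /= ?expr0 ?expr1; ring.
Qed.

Lemma primes_split p k M : prime p -> coprime p M -> (0 < M)%N -> (0 < k)%N ->
  perm_eq (primes (p ^ k * M)) (p :: primes M).
Proof.
move=> pp c M0 k0.
have pk0 : (0 < p ^ k)%N by rewrite expn_gt0 prime_gt0.
have := primesM_perm _ _ (coprime_pow _ _ k c) pk0 M0.
by rewrite primesX // (primes_prime pp).
Qed.



Lemma mainL (R : comNzRingType) (w1 w2 : nat -> R) :
  completely_multiplicative w1 -> completely_multiplicative w2 ->
  forall L, (0 < L)%N -> forall (K : nat -> R) A B, L = (A * B)%N ->
  \sum_(d <- divisors A) \sum_(e <- divisors B | coprime d e)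
     w1 d * w2 e * Jfun L w1 w2 K ((B * d) %/ e)%N
  = (\prod_(p <- primes L) (1 - w1 p * w2 p)) * K B.
Proof.
move=> hw1 hw2 L; elim/ltn_ind: L => L IH L0 K A B hAB.
have [A0 B0] : (0 < A)%N /\ (0 < B)%N by move: L0; rewrite hAB muln_gt0 => /andP[].
case: (ltnP 1 L) => [L1|L1]; last first.
  have L1' : L = 1%N by apply/eqP; rewrite eqn_leq L1 L0.
  move: hAB; rewrite L1' => /esym/eqP; rewrite muln_eq1 => /andP[/eqP eA /eqP eB].
  subst A B; rewrite /Jfun.
  have m1 : mobius R 1 = 1 by rewrite /mobius /= expr0.
  have [h1 _] := hw1; have [h2 _] := hw2.
  rewrite (_ : divisors 1 = [:: 1%N]) // (_ : primes 1 = [::]) //.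
  rewrite !big_cons !big_nil /= m1 h1 h2; ring.
pose p := pdiv L.
have pp : prime p := pdiv_prime L1.
have p0 : (0 < p)%N := prime_gt0 pp.
have [A' cA eA] := pfactor_coprime pp A0.
have [B' cB eB] := pfactor_coprime pp B0.
move: eA eB; move: (logn p A) (logn p B) => s t eA eB.
have A'0 : (0 < A')%N by move: A0; rewrite eA muln_gt0 => /andP[].
have B'0 : (0 < B')%N by move: B0; rewrite eB muln_gt0 => /andP[].
have M0 : (0 < A' * B')%N by rewrite muln_gt0 A'0.
have cM : coprime p (A' * B') by rewrite coprimeMr cA.
have eL : L = (p ^ (s + t) * (A' * B'))%N by rewrite hAB eA eB expnD; ring.
have st0 : (0 < s + t)%N.
  case: posnP => // st0; move: cM; rewrite prime_coprime // => /negP; case.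
  by move: (pdiv_dvd L); rewrite -/p eL st0 expn0 mul1n.
have ltML : (A' * B' < L)%N.
  rewrite eL ltn_Pmull // -(expn0 p) ltn_exp2l //; exact: prime_gt1.
have IH' := IH _ ltML M0.
have eA' : A = (p ^ s * A')%N by rewrite eA mulnC.
have eB' : B = (p ^ t * B')%N by rewrite eB mulnC.
rewrite eL (perm_big _ (primes_split _ _ _ pp cM M0 st0)) big_cons eA' eB'.
clear IH.
under [LHS]eq_bigr => d _ do rewrite big_mkcond.
rewrite sum_divisors_pexpM //.
under [LHS]eq_bigr => i _ do under eq_bigr => d _ do rewrite sum_divisors_pexpM //.
pose u := w1 p; pose v := w2 p.
pose PM := \prod_(q <- primes (A' * B')) (1 - w1 q * w2 q).
transitivity (\sum_(i < s.+1) \sum_(d <- divisors A') \sum_(j < t.+1) \sum_(e <- divisors B')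
  (if ((i == 0%N :> nat) || (j == 0%N :> nat)) && coprime d e then
     (u ^+ i * v ^+ j) * \sum_(al < (t + i - j).+1) \sum_(be < (s + t - (t + i - j)).+1)
        mobius R (p ^ al) * mobius R (p ^ be) * v ^+ al * u ^+ be *
        (w1 d * w2 e * Jfun (A' * B') w1 w2 (fun h => K (p ^ (t + i - j + be - al) * h)%N) (B' * d %/ e))
   else 0)).
  apply: eq_bigr => i _; apply: eq_big_seq => d; rewrite -dvdn_divisors // => dA.
  apply: eq_bigr => j _; apply: eq_big_seq => e; rewrite -dvdn_divisors // => eB1.
  have d0 : (0 < d)%N := dvdn_gt0 A'0 dA.
  have e0 : (0 < e)%N := dvdn_gt0 B'0 eB1.
  have cd : coprime p d := coprime_dvdr dA cA.
  have ce : coprime p e := coprime_dvdr eB1 cB.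
  rewrite cop_split //; case: ifP => // /andP[hij cde].
  rewrite (cm_powM _ _ _ _ _ hw1) // (cm_powM _ _ _ _ _ hw2) //.
  have hj : (j <= t)%N by have := ltn_ord j; have := ltn_ord i; move: hij; lia.
  rewrite [(p ^ t * B' * (p ^ i * d))%N]mulnC arithK // [(d * B')%N]mulnC.
  have gM : (B' * d %/ e %| A' * B')%N.
    by rewrite [(A' * B')%N]mulnC -divn_mulAC // dvdn_mul // dvdn_div.
  have hx : (t + i - j <= s + t)%N by have := ltn_ord i; lia.
  rewrite (Jsplit _ _ _ _ _ _ _ _ _ hw1 hw2 pp cM M0 gM hx).
  rewrite !mulr_sumr; apply: eq_bigr => al _; rewrite !mulr_sumr; apply: eq_bigr => be _.
  by rewrite /u /v; ring.
under [LHS]eq_bigr => i _ do rewrite exchange_big.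
transitivity (PM * \sum_(i < s.+1) \sum_(j < t.+1)
   (if (i == 0%N :> nat) || (j == 0%N :> nat) then
      u ^+ i * v ^+ j * Tf u v (fun y => K (p ^ y * B')%N) (s + t) (t + i - j) else 0)).
  rewrite mulr_sumr; apply: eq_bigr => i _; rewrite mulr_sumr; apply: eq_bigr => j _.
  case: ((i == 0%N :> nat) || (j == 0%N :> nat)) => /=; last first.
    by rewrite mulr0; apply: big1 => d _; apply: big1 => e _.
  rewrite (swap4 _ _ _ _ _ (fun d e => coprime d e) (u ^+ i * v ^+ j)
    (fun al be => mobius R (p ^ al) * mobius R (p ^ be) * v ^+ al * u ^+ be)
    (fun d e al be => w1 d * w2 e * Jfun (A' * B') w1 w2
        (fun h => K (p ^ (t + i - j + be - al) * h)%N) (B' * d %/ e))).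
  under eq_bigr => al _ do under eq_bigr => be _ do rewrite IH' //.
  rewrite (Tf_eqP _ p u v PM (fun y => K (p ^ y * B')%N) (s + t) (t + i - j) pp);
    last by have := ltn_ord i; lia.
  ring.
rewrite oneD //=; rewrite /PM /u /v; ring.
Qed.


Theorem lemma7p2 (R : realType) (L : nat) (w1 w2 K : nat -> R[i])
  (hL : (0 < L)%N)
  (hw1 : completely_multiplicative w1) (hw2 : completely_multiplicative w2)
  (hnz : forall p : nat, p \in primes L -> 1 - w1 p * w2 p != 0)
  (A B : nat) (hAB : L = (A * B)%N) :
  K B =
  (\prod_(p <- primes L) (1 - w1 p * w2 p)^-1) *
  \sum_(d <- divisors A) \sum_(e <- divisors B | coprime d e)
     w1 d * w2 e * Jfun L w1 w2 K ((B * d) %/ e)%N.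
Proof.
rewrite (mainL _ w1 w2 hw1 hw2 L hL K A B hAB) mulrA -big_split /= big1_seq ?mul1r //.
by move=> q /andP[_ qL]; rewrite mulVf // hnz.
Qed.
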